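(* Let $q\in(0,1)$ and let $\tau$ be a GW tree with offspring distribution $p(0)=1-q$, $p(k)=q^2(1-q)^{k-1}$ for $k\ge1$ (which is critical). Let $(\alpha_n,n\in\mathbb N)$ be a sequence of positive integers with $\lim_{n\to\infty}\alpha_n/n^2=0$. Then the conditional law of $\tau$ given $\{\mathcal G_n(\tau)=\alpha_n\}$ converges in distribution to the law of Kesten's tree $\tau^*$ as $n\to\infty$.
   Context: Trees (Neveu formalism): $\mathcal U=\bigcup_{n\ge0}(\mathbb N^* )^n$, $|u|$ the length of $u$. A tree is $\mathbf t\subset\mathcal U$ with $\emptyset\in\mathbf t$, closed under taking prefixes, and such that for every $u\in\mathbf t$ there is $k_u(\mathbf t)\ge0$ with $ui\in\mathbf t\iff1\le i\le k_u(\mathbf t)$. $\mathcal G_n(\mathbf t)=\mathrm{Card}\{u\in\mathbf t:|u|=n\}$. $r_h(\mathbf t)=\{u\in\mathbf t:|u|\le h\}$; convergence in distribution of random trees $T_n\to T$ means $\mathbb P(r_h(T_n)=\mathbf t)\to\mathbb P(r_h(T)=\mathbf t)$ for all $h$ and $\mathbf t$. A GW tree $\tau$ with offspring distribution $p$ satisfies $\mathbb P(r_h(\tau)=\mathbf t)=\prod_{u\in r_{h-1}(\mathbf t)}p(k_u(\mathbf t))$ for all $h\ge1$ and trees $\mathbf t$ of height $\le h$. Kesten's tree $\tau^*$ (for mean $\mu\le1$): with $p^*(n)=np(n)/\mu$, $\tau^*$ is a random tree with a random sequence $(V_k)_{k\ge1}$, $V_1\cdots V_h\in\tau^*$ for all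 $h$, constructed recursively: given $(V_1,\dots,V_h)$ and $r_h(\tau^* )$, the numbers of children of the vertices $v$ with $|v|=h$ are independent, with law $p$ if $v\ne V_1\cdots V_h$ and $p^*$ if $v=V_1\cdots V_h$; then $V_{h+1}$ is uniform on $\{1,\dots,k_{V_1\cdots V_h}(\tau^* )\}$. *)

(* Defs.v *)
From Stdlib Require Import Reals List ClassicalEpsilon.
Import ListNotations.
Open Scope R_scope.

(* This is the usual encoding of finite Neveu trees: the
   vertex u i is the i-th element of the children list of u, k_u = length. *)
Inductive ptree : Type := Node : list ptree -> ptree.

Fixpoint restr (h : nat) (t : ptree) : ptree :=
  match h, t with
  | O, _ => Node []
  | S h', Node l => Node (map (restr h') l)
  end.

Fixpoint gen (n : nat) (t : ptree) : nat :=
  match n, t with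
  | O, _ => 1%nat
  | S n', Node l => fold_right Nat.add 0%nat (map (gen n') l)
  end.

(* Sum of a family of (nonnegative) reals indexed by {x : T | P x}:
   the supremum of all finite sub-sums (classical choice of the lub). *)
Definition tsum_on {T : Type} (P : T -> Prop) (f : T -> R) : R :=
  epsilon (inhabits 0) (fun s =>
    is_lub (fun x => exists L : list T,
               NoDup L /\ Forall P L /\ x = fold_right Rplus 0 (map f L)) s).

Definition Rprod (l : list R) : R := fold_right Rmult 1 l.

(* P(r_h(tau) = t) for a GW tree tau with offspring distribution p:
   prod_{u in r_{h-1}(t)} p(k_u(t)) if t has height <= h, and 0 otherwise. *)
Fixpoint gw_law (p : nat -> R) (h : nat) (t : ptree) : R :=
  match h, t with
  | O, Node l => match l with [] => 1 | _ => 0 end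
  | S h', Node l => p (length l) * Rprod (map (gw_law p h') l)
  end.

Definition mean (p : nat -> R) : R := tsum_on (fun _ : nat => True) (fun k => INR k * p k).
Definition pstar (p : nat -> R) (k : nat) : R := INR k * p k / mean p.

Fixpoint spine_sum (ks gw : ptree -> R) (l : list ptree) : R :=
  match l with
  | [] => 0
  | c :: l' => ks c * Rprod (map gw l') + gw c * spine_sum ks gw l'
  end.

(* P(r_h(tau_star) = t) for Kesten's tree, obtained from the recursive
   construction: the spine vertex has law pstar, the next spine vertex is
   uniform among its k children (factor 1/k), the other vertices are
   independent GW(p); sum over the possible spine vertex V_1. *)
Fixpoint kesten_law (p : nat -> R) (h : nat) (t : ptree) : R :=
  match h, t with
  | O, Node l => match l with [] => 1 | _ => 0 end
  | S h', Node l =>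
      pstar p (length l) / INR (length l) *
      spine_sum (kesten_law p h') (gw_law p h') l
  end.

(* P(r_h(tau) = t | G_n(tau) = a): both events are determined by
   r_m(tau) with m = max n h, whose law is gw_law p m. *)
Definition gw_cond_law (p : nat -> R) (n a h : nat) (t : ptree) : R :=
  let m := Nat.max n h in
  tsum_on (fun s => restr h s = t /\ gen n s = a) (gw_law p m) /
  tsum_on (fun s => gen n s = a) (gw_law p m).

Definition geom_offspring (q : R) (k : nat) : R :=
  match k with
  | O => 1 - q
  | S k' => q ^ 2 * (1 - q) ^ k'
  end.

(* Main.v *)
Require Import Defs.
From Stdlib Require Import Reals List ClassicalEpsilon Lra Lia FinFun Arith ZArith.
Import ListNotations.
Open Scope R_scope.

Definition lsum {T} (f : T -> R) (L : list T) := fold_right Rplus 0 (map f L).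
Definition SE {T} (P : T -> Prop) (f : T -> R) : R -> Prop :=
  fun x => exists L : list T, NoDup L /\ Forall P L /\ x = fold_right Rplus 0 (map f L).
Definition HS {T} (P : T -> Prop) (f : T -> R) (s : R) := is_lub (SE P f) s.
Definition nonneg {T} (f : T -> R) := forall x, 0 <= f x.

Lemma HS_tsum {T} (P : T -> Prop) f s : HS P f s -> tsum_on P f = s.
Proof.
  intros H. unfold tsum_on.
  assert (Hx : exists x, is_lub (SE P f) x) by (exists s; exact H).
  pose proof (epsilon_spec (inhabits 0) _ Hx) as He.
  exact (is_lub_u _ _ _ He H).
Qed.

Lemma lsum_nil {T} (f : T -> R) : lsum f [] = 0. Proof. reflexivity. Qed.
Lemma lsum_cons {T} (f : T -> R) x L : lsum f (x :: L) = f x + lsum f L.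
Proof. reflexivity. Qed.
Lemma lsum_app {T} (f : T -> R) L M : lsum f (L ++ M) = lsum f L + lsum f M.
Proof. induction L; simpl; unfold lsum in *; simpl; try rewrite IHL; lra. Qed.
Lemma lsum_nonneg {T} (f : T -> R) L : nonneg f -> 0 <= lsum f L.
Proof. intros Hf; induction L; unfold lsum in *; simpl; [lra| specialize (Hf a); lra]. Qed.
Lemma lsum_ext {T} (f g : T -> R) L : (forall x, In x L -> f x = g x) -> lsum f L = lsum g L.
Proof.
  induction L; intros H; unfold lsum in *; simpl; auto.
  rewrite H by (left; auto). rewrite IHL; auto. intros; apply H; right; auto.
Qed.
Lemma lsum_map {A B} (f : B -> R) (g : A -> B) L : lsum f (map g L) = lsum (fun x => f (g x)) L.
Proof. unfold lsum; rewrite map_map; reflexivity. Qed.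
Lemma lsum_scal {T} (f : T -> R) c L : lsum (fun x => c * f x) L = c * lsum f L.
Proof. induction L; unfold lsum in *; simpl; [ring| rewrite IHL; ring]. Qed.

Definition dec {T} (x y : T) : {x = y} + {x <> y} := excluded_middle_informative (x = y).

Lemma lsum_remove {T} (f : T -> R) x M : NoDup M -> In x M ->
  lsum f M = f x + lsum f (remove dec x M).
Proof.
  induction M as [|y M IH]; intros Hn Hi; [destruct Hi|].
  inversion Hn; subst. simpl. destruct (dec x y) as [e|ne].
  - subst. rewrite notin_remove by auto. rewrite lsum_cons. ring.
  - destruct Hi as [Hi|Hi]; [congruence|]. rewrite !lsum_cons. rewrite IH; auto. ring.
Qed.

Lemma NoDup_remove' {T} x (M : list T) : NoDup M -> NoDup (remove dec x M).
Proof.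
  induction M as [|y M IH]; intros Hn; simpl; auto. inversion Hn; subst.
  destruct (dec x y); auto. constructor; auto. intros Hin. apply in_remove in Hin. tauto.
Qed.

Lemma lsum_sub {T} (f : T -> R) L : nonneg f -> forall M, NoDup L -> NoDup M ->
  incl L M -> lsum f L <= lsum f M.
Proof.
  intros Hf. induction L as [|x L IH]; intros M HL HM Hi.
  - rewrite lsum_nil. apply lsum_nonneg; auto.
  - inversion HL; subst. rewrite (lsum_remove f x M HM) by (apply Hi; left; auto).
    rewrite lsum_cons. apply Rplus_le_compat_l. apply IH; auto.
    apply NoDup_remove'; auto.
    intros z Hz. apply in_in_remove. intros ->. contradiction.
    apply Hi; right; auto.
Qed.

Lemma HS_intro {T} (P : T -> Prop) f s :
  (forall L, NoDup L -> Forall P L -> lsum f L <= s) ->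
  (forall eps, 0 < eps -> exists L, NoDup L /\ Forall P L /\ s - eps < lsum f L) ->
  HS P f s.
Proof.
  intros Hub Hap. split.
  - intros x [L [H1 [H2 ->]]]. apply Hub; auto.
  - intros b Hb. destruct (Rle_dec s b) as [|Hn]; auto. exfalso.
    destruct (Hap (s - b)) as [L [H1 [H2 H3]]]; [lra|].
    assert (lsum f L <= b) by (apply Hb; exists L; auto). lra.
Qed.

Lemma HS_ub {T} (P : T -> Prop) f s L : HS P f s -> NoDup L -> Forall P L -> lsum f L <= s.
Proof. intros [H _] H1 H2. apply H. exists L; auto. Qed.

Lemma HS_approx {T} (P : T -> Prop) f s eps : HS P f s -> 0 < eps ->
  exists L, NoDup L /\ Forall P L /\ s - eps < lsum f L.
Proof.
  intros [H1 H2] He. apply NNPP. intros Hn.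
  assert (s <= s - eps); [|lra]. apply H2. intros x [L [A [B ->]]].
  apply Rnot_lt_le. intros Hc. apply Hn. exists L; auto.
Qed.

Lemma HS_nonneg {T} (P : T -> Prop) f s : HS P f s -> 0 <= s.
Proof. intros H. apply (HS_ub P f s []); auto. constructor. Qed.

Lemma HS_ext {T} (P Q : T -> Prop) f g s : (forall x, P x <-> Q x) ->
  (forall x, Q x -> f x = g x) -> HS P f s -> HS Q g s.
Proof.
  intros HPQ Hfg H. apply HS_intro.
  - intros L H1 H2. rewrite <- (lsum_ext f g).
    apply (HS_ub _ _ _ _ H H1). rewrite Forall_forall in *. intros; apply HPQ; auto.
    rewrite Forall_forall in H2; intros; auto.
  - intros eps He. destruct (HS_approx _ _ _ _ H He) as [L [H1 [H2 H3]]].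
    exists L. assert (Forall Q L) by (rewrite Forall_forall in *; intros; apply HPQ; auto).
    repeat split; auto. rewrite <- (lsum_ext f g); auto.
    rewrite Forall_forall in H0; intros; auto.
Qed.

Lemma HS_empty {T} (P : T -> Prop) f : (forall x, ~ P x) -> HS P f 0.
Proof.
  intros H. apply HS_intro.
  - intros [|x L] _ HF; [rewrite lsum_nil; lra|]. inversion HF; subst. exfalso; eapply H; eauto.
  - intros eps He; exists []; repeat split; [constructor|constructor|rewrite lsum_nil; lra].
Qed.

Lemma HS_single {T} (P : T -> Prop) f x0 : nonneg f -> (forall x, P x <-> x = x0) ->
  HS P f (f x0).
Proof.
  intros Hf H. apply HS_intro.
  - intros [|x [|y L]] H1 H2; [rewrite lsum_nil; apply Hf| |].
    + inversion H2; subst. apply H in H4. subst. unfold lsum; simpl; lra.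
    + inversion H2; subst. inversion H5; subst. apply H in H4. apply H in H6. subst.
      inversion H1; subst. exfalso; apply H4; left; auto.
  - intros eps He; exists [x0]; repeat split.
    constructor; [intros []|constructor]. constructor; [apply H; auto| constructor].
    unfold lsum; simpl; lra.
Qed.

Lemma HS_scale {T} (P : T -> Prop) f s c : 0 <= c -> HS P f s -> HS P (fun x => c * f x) (c * s).
Proof.
  intros Hc H. apply HS_intro.
  - intros L H1 H2. rewrite lsum_scal. apply Rmult_le_compat_l; auto. eapply HS_ub; eauto.
  - intros eps He. destruct (Req_dec c 0) as [->|Hc0].
    + exists []; repeat split; try constructor. rewrite lsum_nil. lra.
    + destruct (HS_approx _ _ _ (eps / c) H) as [L [H1 [H2 H3]]].
      apply Rdiv_lt_0_compat; lra.
      exists L; repeat split; auto. rewrite lsum_scal.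
      assert (c * (s - eps / c) = c * s - eps) by (field; auto).
      assert (c * (s - eps / c) < c * lsum f L) by (apply Rmult_lt_compat_l; lra). lra.
Qed.

Lemma HS_inj {A B} (P : A -> Prop) (f : A -> R) s (F : A -> B) (G : B -> A) :
  (forall a, G (F a) = a) -> HS P f s ->
  HS (fun b => exists a, P a /\ b = F a) (fun b => f (G b)) s.
Proof.
  intros HGF H. apply HS_intro.
  - intros L H1 H2. rewrite <- lsum_map. apply (HS_ub _ _ _ _ H).
    + apply NoDup_map_NoDup_ForallPairs; auto. intros x y Hx Hy E.
      rewrite Forall_forall in H2. destruct (H2 x Hx) as [a [_ ->]].
      destruct (H2 y Hy) as [b [_ ->]]. rewrite !HGF in E. subst; auto.
    + rewrite Forall_forall in *. intros x Hx. apply in_map_iff in Hx.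
      destruct Hx as [y [<- Hy]]. destruct (H2 y Hy) as [a [Ha ->]]. rewrite HGF; auto.
  - intros eps He. destruct (HS_approx _ _ _ _ H He) as [L [H1 [H2 H3]]].
    exists (map F L). repeat split.
    + apply NoDup_map_NoDup_ForallPairs; auto. intros x y _ _ E.
      rewrite <- (HGF x), <- (HGF y), E; auto.
    + rewrite Forall_forall in *. intros x Hx. apply in_map_iff in Hx.
      destruct Hx as [y [<- Hy]]. exists y; auto.
    + rewrite lsum_map. rewrite (lsum_ext _ f); auto. intros; rewrite HGF; auto.
Qed.

Lemma NoDup_list_prod' {A B} (X : list A) (Y : list B) : NoDup X -> NoDup Y -> NoDup (list_prod X Y).
Proof.
  induction X as [|x X IH]; intros HX HY; simpl; [constructor|]. inversion HX; subst.
  apply NoDup_app; auto.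
  - apply FinFun.Injective_map_NoDup; auto. intros a b E; inversion E; auto.
  - intros [a b] Ha Hb. apply in_map_iff in Ha. destruct Ha as [y [E _]]. inversion E; subst.
    apply in_prod_iff in Hb. tauto.
Qed.

Lemma lsum_prod {A B} (f : A -> R) (g : B -> R) X Y :
  lsum (fun p => f (fst p) * g (snd p)) (list_prod X Y) = lsum f X * lsum g Y.
Proof.
  induction X as [|x X IH]; simpl; [rewrite !lsum_nil; ring|].
  rewrite lsum_app, IH, lsum_map, lsum_cons. simpl. rewrite lsum_scal. ring.
Qed.

Lemma HS_prod {A B} (P : A -> Prop) (Q : B -> Prop) f g s1 s2 : nonneg f -> nonneg g ->
  HS P f s1 -> HS Q g s2 ->
  HS (fun x => P (fst x) /\ Q (snd x)) (fun x => f (fst x) * g (snd x)) (s1 * s2).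
Proof.
  intros Hf Hg H1 H2. pose proof (HS_nonneg _ _ _ H1). pose proof (HS_nonneg _ _ _ H2).
  apply HS_intro.
  - intros L HL HF. set (X := nodup dec (map fst L)). set (Y := nodup dec (map snd L)).
    assert (HX : NoDup X) by apply NoDup_nodup. assert (HY : NoDup Y) by apply NoDup_nodup.
    apply Rle_trans with (lsum (fun p => f (fst p) * g (snd p)) (list_prod X Y)).
    + apply lsum_sub; auto. intros [a b]; simpl. apply Rmult_le_pos; auto.
      apply NoDup_list_prod'; auto.
      intros [a b] Hab. apply in_prod; apply nodup_In; apply in_map_iff; exists (a, b); auto.
    + rewrite lsum_prod. rewrite Forall_forall in HF.
      assert (lsum f X <= s1).
      { apply (HS_ub _ _ _ _ H1 HX). rewrite Forall_forall. intros a Ha.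
        apply nodup_In, in_map_iff in Ha. destruct Ha as [[a' b] [<- Hin]]. apply (HF _ Hin). }
      assert (lsum g Y <= s2).
      { apply (HS_ub _ _ _ _ H2 HY). rewrite Forall_forall. intros a Ha.
        apply nodup_In, in_map_iff in Ha. destruct Ha as [[a' b] [<- Hin]]. apply (HF _ Hin). }
      pose proof (lsum_nonneg f X Hf). pose proof (lsum_nonneg g Y Hg).
      apply Rmult_le_compat; auto.
  - intros eps He. set (d := eps / (s1 + s2 + 1)).
    assert (Hd : 0 < d) by (apply Rdiv_lt_0_compat; lra).
    assert (Hd2 : d * (s1 + s2) < eps).
    { unfold d. apply Rmult_lt_reg_r with (s1 + s2 + 1); [lra|].
      field_simplify; [|lra]. nra. }
    destruct (HS_approx _ _ _ _ H1 Hd) as [X [HX1 [HX2 HX3]]].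
    destruct (HS_approx _ _ _ _ H2 Hd) as [Y [HY1 [HY2 HY3]]].
    exists (list_prod X Y). repeat split.
    + apply NoDup_list_prod'; auto.
    + rewrite Forall_forall in *. intros [a b] Hab. apply in_prod_iff in Hab. simpl; split; auto.
      apply HX2; tauto. apply HY2; tauto.
    + rewrite lsum_prod.
      assert (lsum g Y <= s2) by (apply (HS_ub _ _ _ _ H2 HY1 HY2)).
      pose proof (lsum_nonneg g Y Hg).
      assert ((lsum f X - s1) * lsum g Y >= - d * lsum g Y) by nra.
      assert (s1 * (lsum g Y - s2) >= - s1 * d) by nra.
      nra.
Qed.

Lemma sum_indic (a M : nat) (c : R) : (a <= M)%nat ->
  sum_f_R0 (fun k => if Nat.eqb a k then c else 0) M = c.
Proof.
  induction M; intros H.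
  - simpl. assert (a = 0)%nat by lia. subst; simpl; auto.
  - rewrite tech5. destruct (Nat.eq_dec a (S M)) as [->|Hn].
    + rewrite Nat.eqb_refl. rewrite (sum_eq _ (fun _ => 0)).
      * rewrite sum_cte. ring.
      * intros i Hi. destruct (Nat.eqb_spec (S M) i); [lia|auto].
    + rewrite IHM by lia. destruct (Nat.eqb_spec a (S M)); [lia|ring].
Qed.

Lemma lsum_decomp {T} (f : T -> R) (phi : T -> nat) M L : (forall x, In x L -> (phi x <= M)%nat) ->
  lsum f L = sum_f_R0 (fun k => lsum f (filter (fun x => Nat.eqb (phi x) k) L)) M.
Proof.
  induction L as [|x L IH]; intros H.
  - rewrite lsum_nil. rewrite (sum_eq _ (fun _ => 0)); [rewrite sum_cte; ring|intros; reflexivity].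
  - simpl. rewrite lsum_cons. rewrite IH by (intros; apply H; right; auto).
    transitivity (sum_f_R0 (fun k => (if Nat.eqb (phi x) k then f x else 0) +
                               lsum f (filter (fun x => Nat.eqb (phi x) k) L)) M).
    + rewrite sum_plus. rewrite sum_indic; auto. apply H; left; auto.
    + apply sum_eq. intros i _. simpl. destruct (Nat.eqb (phi x) i); [rewrite lsum_cons|]; ring.
Qed.

Lemma growing_le_lim (u : nat -> R) l n : (forall k, u k <= u (S k)) -> Un_cv u l -> u n <= l.
Proof.
  intros Hg Hc. apply Rnot_lt_le; intros Hlt.
  destruct (Hc (u n - l)) as [N HN]; [lra|].
  assert (forall k, u n <= u (k + n)%nat).
  { induction k; simpl; [lra| specialize (Hg (k+n)%nat); lra]. }
  specialize (HN (N + n)%nat ltac:(lia)). specialize (H N). unfold R_dist in HN.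
  apply Rabs_def2 in HN. lra.
Qed.

Lemma HS_part {T} (P : T -> Prop) f (phi : T -> nat) (s : nat -> R) Sl : nonneg f ->
  (forall k, HS (fun x => P x /\ phi x = k) f (s k)) -> Un_cv (sum_f_R0 s) Sl -> HS P f Sl.
Proof.
  intros Hf Hs Hc.
  assert (Hs0 : forall k, 0 <= s k) by (intros; eapply HS_nonneg; eauto).
  assert (Hg : forall k, sum_f_R0 s k <= sum_f_R0 s (S k)) by (intros; rewrite tech5; specialize (Hs0 (S k)); lra).
  apply HS_intro.
  - intros L HL HF.
    set (M := fold_right Nat.max 0%nat (map phi L)).
    assert (HM : forall x, In x L -> (phi x <= M)%nat).
    { unfold M; clear. induction L as [|y L IHL]; simpl; intros x Hx; [destruct Hx|].
      destruct Hx as [->|Hx]; [lia|]. specialize (IHL x Hx); lia. }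
    rewrite (lsum_decomp f phi M L HM).
    apply Rle_trans with (sum_f_R0 s M); [|apply growing_le_lim; auto].
    apply sum_Rle. intros k _. apply (HS_ub _ _ _ _ (Hs k)).
    + apply NoDup_filter; auto.
    + rewrite Forall_forall in *. intros x Hx. apply filter_In in Hx. destruct Hx as [Hx E].
      apply Nat.eqb_eq in E. split; auto.
  - assert (Hfin : forall N d, 0 < d -> exists L, NoDup L /\ Forall P L /\
               (forall x, In x L -> (phi x <= N)%nat) /\ sum_f_R0 s N - d < lsum f L).
    { induction N; intros d Hd.
      - destruct (HS_approx _ _ _ _ (Hs 0%nat) Hd) as [L [H1 [H2 H3]]].
        exists L. rewrite Forall_forall in H2. repeat split; auto.
        rewrite Forall_forall; intros; apply H2; auto. intros x Hx; destruct (H2 x Hx); lia.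
      - destruct (IHN (d/2)) as [L1 [A1 [B1 [C1 D1]]]]; [lra|].
        destruct (HS_approx _ _ _ (d/2) (Hs (S N))) as [L2 [A2 [B2 C2]]]; [lra|].
        rewrite Forall_forall in B2.
        exists (L1 ++ L2). repeat split.
        + apply NoDup_app; auto. intros a Ha Hb. apply C1 in Ha. destruct (B2 a Hb). lia.
        + apply Forall_app; split; auto. rewrite Forall_forall; intros; apply B2; auto.
        + intros x Hx. apply in_app_or in Hx. destruct Hx as [Hx|Hx]; [apply C1 in Hx; lia|].
          destruct (B2 x Hx); lia.
        + rewrite lsum_app, tech5. lra. }
    intros eps He. destruct (Hc (eps/2)) as [N HN]; [lra|].
    specialize (HN N (Nat.le_refl _)). unfold R_dist in HN. apply Rabs_def2 in HN.
    destruct (Hfin N (eps/2)) as [L [A [B [C D]]]]; [lra|]. exists L; repeat split; auto. lra.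
Qed.

Lemma HS_part_fin {T} (P : T -> Prop) f (phi : T -> nat) (s : nat -> R) N : nonneg f ->
  (forall k, (k <= N)%nat -> HS (fun x => P x /\ phi x = k) f (s k)) ->
  (forall x, P x -> (phi x <= N)%nat) -> HS P f (sum_f_R0 s N).
Proof.
  intros Hf Hs Hb.
  apply (HS_part P f phi (fun k => if Nat.leb k N then s k else 0)); auto.
  - intros k. destruct (Nat.leb_spec k N).
    + apply Hs; auto.
    + apply HS_empty. intros x [Hx E]. apply Hb in Hx. lia.
  - intros eps He. exists N. intros n Hn. unfold R_dist.
    replace (sum_f_R0 (fun k => if Nat.leb k N then s k else 0) n) with (sum_f_R0 s N).
    rewrite Rminus_eq_0, Rabs_R0; auto.
    induction n.
    + assert (N = 0)%nat by lia. subst. reflexivity.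
    + destruct (Nat.eq_dec (S n) N) as [E|E].
      * rewrite <- E. apply sum_eq. intros i Hi. destruct (Nat.leb_spec i (S n)); [auto|lia].
      * rewrite tech5. rewrite <- IHn by lia. destruct (Nat.leb_spec (S n) N); [lia|ring].
Qed.

Lemma HS_zero {T} (P : T -> Prop) f : (forall x, P x -> f x = 0) -> HS P f 0.
Proof.
  intros H. apply HS_intro.
  - intros L _ HF. rewrite (lsum_ext f (fun _ => 0)).
    + clear. induction L; unfold lsum in *; simpl; lra.
    + rewrite Forall_forall in HF; intros; apply H; auto.
  - intros eps He; exists []; repeat split; try constructor. rewrite lsum_nil; lra.
Qed.

Lemma HS_point {T} (P : T -> Prop) f x0 : nonneg f -> P x0 ->
  (forall x, P x -> x <> x0 -> f x = 0) -> HS P f (f x0).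
Proof.
  intros Hf H0 H.
  replace (f x0) with (sum_f_R0 (fun k => if Nat.eqb k 0 then f x0 else 0) 1) by (simpl; ring).
  apply (HS_part_fin P f (fun x => if dec x x0 then 0%nat else 1%nat)); auto.
  - intros k Hk. destruct k as [|[|k]]; [|simpl|lia].
    + simpl. apply HS_single; auto. intros x; split.
      * intros [_ E]. destruct (dec x x0); auto; discriminate.
      * intros ->. split; auto. destruct (dec x0 x0); auto; congruence.
    + apply HS_zero. intros x [Hx E]. destruct (dec x x0); [discriminate|]. apply H; auto.
  - intros x _. destruct (dec x x0); lia.
Qed.

Fixpoint convl (Vs : list (nat -> R)) (a : nat) : R :=
  match Vs with
  | [] => if Nat.eqb a 0 then 1 else 0
  | V :: Vs' => sum_f_R0 (fun b => V b * convl Vs' (a - b)) a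
  end.

Definition Rprod_nonneg (l : list R) : Forall (fun x => 0 <= x) l -> 0 <= Rprod l.
Proof. induction l; intros H; simpl; [lra|]. inversion H; subst. apply Rmult_le_pos; auto. Qed.

Lemma Rprod_map_nonneg {T} (f : T -> R) l : nonneg f -> 0 <= Rprod (map f l).
Proof. intros Hf; apply Rprod_nonneg. rewrite Forall_forall; intros x Hx.
  apply in_map_iff in Hx; destruct Hx as [y [<- _]]; auto. Qed.

Definition sumn (l : list nat) := fold_right Nat.add 0%nat l.

Lemma GF {T S} (d : T) (Rl : S -> T -> Prop) (g : T -> nat) (f : T -> R) (V : S -> nat -> R) :
  nonneg f ->
  (forall s b, HS (fun c => Rl s c /\ g c = b) f (V s b)) ->
  forall ss a, HS (fun l => Forall2 Rl ss l /\ sumn (map g l) = a) (fun l => Rprod (map f l))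
                  (convl (map V ss) a).
Proof.
  intros Hf HV. induction ss as [|s ss IH]; intros a.
  - simpl. destruct (Nat.eqb_spec a 0) as [->|Ha].
    + replace 1 with (Rprod (map f [])) by reflexivity.
      apply (HS_single _ (fun l => Rprod (map f l)) []).
      * intros l; apply Rprod_map_nonneg; auto.
      * intros l; split; [intros [H _]; inversion H; auto| intros ->; split; auto].
    + apply HS_empty. intros l [H1 H2]. inversion H1; subst. simpl in *. lia.
  - simpl. apply (HS_part_fin _ _ (fun l => match l with c :: _ => g c | [] => 0%nat end)).
    + intros l; apply Rprod_map_nonneg; auto.
    + intros k Hk.
      pose proof (HS_prod _ _ _ _ _ _ Hf (fun l => Rprod_map_nonneg f l Hf) (HV s k) (IH (a - k)%nat)) as HP.
      pose proof (HS_inj _ _ _ (fun pr => fst pr :: snd pr)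
                     (fun l => match l with c :: l' => (c, l') | [] => (d, []) end)
                     (fun pr => match pr with (x, y) => eq_refl end) HP) as HI.
      eapply HS_ext; [|intros; reflexivity|].
      2:{ eapply HS_ext; [intros; apply iff_refl| |exact HI].
          intros l [[c l'] [_ ->]]. reflexivity. }
      intros l; split.
      * intros [[c l'] [[[H1 H2] [H3 H4]] ->]]; simpl in *. repeat split; auto. lia.
      * intros [[H1 H2] H3]. destruct l as [|c l']; [inversion H1|].
        inversion H1; subst. exists (c, l'); simpl in *; repeat split; auto. lia.
    + intros [|c l] [H1 H2]; [lia|]. simpl in H2. lia.
Qed.

Lemma Forall2_map_iff (h : nat) lt l : Forall2 (fun t c => restr h c = t) lt l <-> map (restr h) l = lt.
Proof.
  revert l; induction lt as [|t lt IH]; intros l; split; intros H.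
  - inversion H; auto.
  - destruct l; [constructor|discriminate].
  - inversion H; subst. simpl. f_equal. apply IH; auto.
  - destruct l as [|c l]; [discriminate|]. simpl in H. inversion H; subst.
    constructor; auto. apply IH; auto.
Qed.

Lemma Forall2_len lt (l : list ptree) : Forall2 (fun (_ : unit) (_ : ptree) => True) (repeat tt lt) l <-> length l = lt.
Proof.
  revert l; induction lt as [|k IH]; intros l; split; intros H.
  - inversion H; auto.
  - destruct l; [constructor|discriminate].
  - inversion H; subst. simpl. f_equal. apply IH; auto.
  - destruct l as [|c l]; [discriminate|]. simpl in H. injection H as H.
    simpl. constructor; auto. apply IH; auto.
Qed.

Definition children (t : ptree) := match t with Node l => l end.

Lemma HS_node (Pl : list ptree -> Prop) (f : ptree -> R) (w : list ptree -> R) s :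
  HS Pl w s -> (forall l, Pl l -> f (Node l) = w l) ->
  HS (fun t => exists l, Pl l /\ t = Node l) f s.
Proof.
  intros H Hf. pose proof (HS_inj _ _ _ Node children (fun _ => eq_refl) H) as HI.
  eapply HS_ext; [intros; apply iff_refl| |exact HI].
  intros t [l [Hl ->]]. simpl. symmetry; auto.
Qed.

Lemma gw_nonneg p : nonneg p -> forall h, nonneg (gw_law p h).
Proof.
  intros Hp h. induction h; intros [l]; simpl.
  - destruct l; lra.
  - apply Rmult_le_pos; auto. apply Rprod_map_nonneg; auto.
Qed.

Definition convpow (K : nat) (pi : nat -> R) := convl (repeat pi K).

Lemma gen_node n l : gen (S n) (Node l) = sumn (map (gen n) l).
Proof. reflexivity. Qed.

Lemma T_all (p : nat -> R) (pi : nat -> nat -> R) : nonneg p ->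
  (forall b, pi 0%nat b = if Nat.eqb b 1 then 1 else 0) ->
  (forall j b, Un_cv (sum_f_R0 (fun K => p K * convpow K (pi j) b)) (pi (S j) b)) ->
  forall j b, HS (fun c => gen j c = b) (gw_law p j) (pi j b).
Proof.
  intros Hp H0 HS1. induction j; intros b.
  - rewrite H0. destruct (Nat.eqb_spec b 1) as [->|Hb].
    + replace 1 with (gw_law p 0 (Node [])) by reflexivity.
      apply HS_point; auto. apply gw_nonneg; auto.
      intros [[|x l]] _ Hn; simpl; auto. congruence.
    + apply HS_empty. intros x Hx; simpl in Hx. destruct x; simpl in Hx; auto.
  - apply (HS_part _ _ (fun c => length (children c)) (fun K => p K * convpow K (pi j) b)); auto.
    + apply gw_nonneg; auto.
    + intros K.
      assert (HF : HS (fun l => Forall2 (fun (_ : unit) (_ : ptree) => True) (repeat tt K) l /\ sumn (map (gen j) l) = b)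
                 (fun l => Rprod (map (gw_law p j) l)) (convl (map (fun _ => pi j) (repeat tt K)) b)).
      { apply (GF (Node [])). apply gw_nonneg; auto.
        intros s0 b'. eapply HS_ext; [| |apply (IHj b')].
        - intros c; split; [intros H; split; auto| intros [_ H]; auto].
        - reflexivity. }
      rewrite map_repeat in HF. fold (convpow K (pi j)) in HF.
      apply (HS_scale _ _ _ (p K) (Hp K)) in HF.
      apply HS_node with (f := gw_law p (S j)) in HF.
      * eapply HS_ext; [|intros; reflexivity|exact HF].
        intros [l]; split.
        -- intros [l' [[H1 H2] E]]. injection E as ->. apply Forall2_len in H1. simpl; auto.
        -- intros [H1 H2]. exists l. simpl in H2. repeat split; auto. apply Forall2_len; auto.
      * intros l [H1 H2]. apply Forall2_len in H1. simpl. rewrite H1. reflexivity.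
Qed.

Definition conv (f g : nat -> R) (a : nat) := sum_f_R0 (fun b => f b * g (a - b)%nat) a.
Definition delta (a : nat) : R := if Nat.eqb a 0 then 1 else 0.

Lemma convpow_0 pi a : convpow 0 pi a = delta a. Proof. reflexivity. Qed.
Lemma convpow_S K pi a : convpow (S K) pi a = conv pi (convpow K pi) a. Proof. reflexivity. Qed.

Lemma sum_first (f : nat -> R) a : sum_f_R0 f (S a) = f 0%nat + sum_f_R0 (fun i => f (S i)) a.
Proof. rewrite decomp_sum by lia. reflexivity. Qed.

Lemma sum_zero (f : nat -> R) a : (forall i, (i <= a)%nat -> f i = 0) -> sum_f_R0 f a = 0.
Proof. intros H. rewrite (sum_eq _ (fun _ => 0)); auto. rewrite sum_cte; ring. Qed.

Lemma conv_delta_l u a : conv delta u a = u a.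
Proof.
  unfold conv. destruct a.
  - simpl. unfold delta; simpl. ring.
  - rewrite sum_first. rewrite sum_zero. unfold delta; simpl. ring.
    intros i _. unfold delta; simpl. ring.
Qed.

Lemma conv_delta_r u a : conv u delta a = u a.
Proof.
  unfold conv. destruct a.
  - simpl. unfold delta; simpl. ring.
  - rewrite tech5. rewrite sum_zero. rewrite Nat.sub_diag. unfold delta; simpl. ring.
    intros i Hi. unfold delta. destruct (Nat.eqb_spec (S a - i) 0); [lia|ring].
Qed.

Lemma tri (F : nat -> nat -> R) a :
  sum_f_R0 (fun b => sum_f_R0 (fun c => F c b) b) a =
  sum_f_R0 (fun c => sum_f_R0 (fun e => F c (c + e)%nat) (a - c)) a.
Proof.
  induction a.
  - reflexivity.
  - rewrite tech5, IHa. symmetry. rewrite tech5.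
    replace (S a - S a)%nat with 0%nat by lia. simpl (sum_f_R0 _ 0). rewrite Nat.add_0_r.
    rewrite (sum_eq (fun c => sum_f_R0 (fun e => F c (c + e)%nat) (S a - c))
                    (fun c => sum_f_R0 (fun e => F c (c + e)%nat) (a - c) + F c (S a))).
    + rewrite sum_plus, tech5. ring.
    + intros i Hi. replace (S a - i)%nat with (S (a - i)) by lia. rewrite tech5.
      f_equal. f_equal. lia.
Qed.

Lemma conv_assoc f g h a : conv (conv f g) h a = conv f (conv g h) a.
Proof.
  unfold conv.
  transitivity (sum_f_R0 (fun b => sum_f_R0 (fun c => f c * g (b - c)%nat * h (a - b)%nat) b) a).
  - apply sum_eq. intros b _. rewrite Rmult_comm, scal_sum. apply sum_eq; intros; ring.
  - rewrite tri. apply sum_eq. intros c Hc. rewrite scal_sum. apply sum_eq. intros e He.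
    replace (c + e - c)%nat with e by lia. replace (a - (c + e))%nat with (a - c - e)%nat by lia. ring.
Qed.

Lemma conv_ext_r f g1 g2 a : (forall b, (b <= a)%nat -> g1 b = g2 b) -> conv f g1 a = conv f g2 a.
Proof. intros H. unfold conv. apply sum_eq. intros i Hi. rewrite H by lia. reflexivity. Qed.
Lemma conv_ext_l f1 f2 g a : (forall b, (b <= a)%nat -> f1 b = f2 b) -> conv f1 g a = conv f2 g a.
Proof. intros H. unfold conv. apply sum_eq. intros i Hi. rewrite H by lia. reflexivity. Qed.

Lemma semigroup pi k1 k2 a : conv (convpow k1 pi) (convpow k2 pi) a = convpow (k1 + k2) pi a.
Proof.
  revert a. induction k1; intros a.
  - rewrite (conv_ext_l _ delta) by (intros; reflexivity). apply conv_delta_l.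
  - rewrite (conv_ext_l _ (conv pi (convpow k1 pi))) by (intros; reflexivity).
    rewrite conv_assoc. simpl (S k1 + k2)%nat. rewrite convpow_S.
    apply conv_ext_r. intros; apply IHk1.
Qed.

Lemma convpow_one pi a : convpow 1 pi a = pi a.
Proof. rewrite convpow_S. rewrite (conv_ext_r _ _ delta) by (intros; reflexivity). apply conv_delta_r. Qed.

Lemma convpow_zero_pt pi K : convpow K pi 0 = pi 0%nat ^ K.
Proof. induction K; [reflexivity|]. rewrite convpow_S. unfold conv. simpl. rewrite IHK. ring. Qed.

Lemma convl_semi (pi : nat -> R) (w : ptree -> R) (k : ptree -> nat) lt a :
  convl (map (fun t b => w t * convpow (k t) pi b) lt) a =
  Rprod (map w lt) * convpow (sumn (map k lt)) pi a.
Proof.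
  revert a. induction lt as [|t lt IH]; intros a.
  - simpl. unfold convpow. simpl. ring.
  - simpl. rewrite <- semigroup. unfold conv.
    rewrite scal_sum. apply sum_eq. intros i _. rewrite IH. ring.
Qed.

Lemma N_all (p : nat -> R) (pi : nat -> nat -> R) : nonneg p ->
  (forall j b, HS (fun c => gen j c = b) (gw_law p j) (pi j b)) ->
  forall h j t a, HS (fun s => restr h s = t /\ gen (h + j) s = a) (gw_law p (h + j))
                     (gw_law p h t * convpow (gen h t) (pi j) a).
Proof.
  intros Hp HT. induction h; intros j [lt] a.
  - destruct lt as [|x lt].
    + simpl. rewrite convpow_one. rewrite Rmult_1_l.
      eapply HS_ext; [|intros; reflexivity|apply (HT j a)].
      intros s; split; [intros H; split; auto| intros [_ H]; auto].
    + simpl. rewrite Rmult_0_l. apply HS_empty. intros s [H _]. discriminate.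
  - assert (HF := GF (Node []) (fun t c => restr h c = t) (gen (h + j)) (gw_law p (h + j))
                  (fun t b => gw_law p h t * convpow (gen h t) (pi j) b) (gw_nonneg p Hp _)
                  (fun t b => IHh j t b) lt a).
    rewrite convl_semi in HF.
    apply (HS_scale _ _ _ (p (length lt)) (Hp _)) in HF.
    apply HS_node with (f := gw_law p (S h + j)) in HF.
    + replace (gw_law p (S h) (Node lt) * convpow (gen (S h) (Node lt)) (pi j) a)
        with (p (length lt) * (Rprod (map (gw_law p h) lt) * convpow (sumn (map (gen h) lt)) (pi j) a))
        by (simpl; unfold sumn; ring).
      eapply HS_ext; [|intros; reflexivity|exact HF].
      intros [l]; split.
      * intros [l' [[H1 H2] E]]. injection E as ->. apply Forall2_map_iff in H1.
        simpl. rewrite H1. split; auto.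
      * intros [H1 H2]. exists l. simpl in H1, H2. injection H1 as H1. repeat split; auto.
        apply Forall2_map_iff; auto.
    + intros l [H1 H2]. apply Forall2_map_iff in H1. simpl.
      rewrite <- H1, map_length. reflexivity.
Qed.

Definition Lz (z : R) (b : nat) : R := match b with O => z | S b' => (1 - z) ^ 2 * z ^ b' end.
Definition wc (y z : R) : R := (y + z - 2 * y * z) / (1 - y * z).

Lemma CV_const (c : R) : Un_cv (fun _ => c) c.
Proof. intros eps He; exists 0%nat; intros; unfold R_dist; rewrite Rminus_diag, Rabs_R0; auto. Qed.

Lemma sum_swap (F : nat -> nat -> R) a N :
  sum_f_R0 (fun K => sum_f_R0 (fun b => F K b) a) N = sum_f_R0 (fun b => sum_f_R0 (fun K => F K b) N) a.
Proof.
  induction N.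
  - reflexivity.
  - rewrite tech5, IHN. rewrite <- sum_plus. apply sum_eq. intros; rewrite tech5; reflexivity.
Qed.

Lemma cv_sum0 (F : nat -> nat -> R) n : (forall i, (i <= n)%nat -> Un_cv (fun N => F N i) 0) ->
  Un_cv (fun N => sum_f_R0 (F N) n) 0.
Proof.
  induction n; intros H.
  - simpl. apply H; lia.
  - replace 0 with (0 + 0) by ring.
    apply (Un_cv_ext (fun N => sum_f_R0 (F N) n + F N (S n))).
    + intros; rewrite tech5; reflexivity.
    + apply CV_plus; [apply IHn; intros; apply H; lia| apply H; lia].
Qed.

Lemma rec_lim (x e : nat -> R) c rho : 0 <= rho < 1 ->
  (forall N, x (S N) = c + rho * x N + e N) -> Un_cv e 0 -> Un_cv x (c / (1 - rho)).
Proof.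
  intros Hr Hx He eps Heps.
  set (L := c / (1 - rho)).
  assert (HD : forall N, x (S N) - L = rho * (x N - L) + e N).
  { intros N. rewrite Hx. unfold L. field. lra. }
  set (eta := eps * (1 - rho) / 2).
  assert (Heta : 0 < eta) by (unfold eta; apply Rmult_lt_0_compat; [apply Rmult_lt_0_compat|]; lra).
  destruct (He eta Heta) as [M HM].
  assert (Hk : forall k, Rabs (x (k + M)%nat - L) <= rho ^ k * Rabs (x M - L) + eta / (1 - rho)).
  { induction k.
    - simpl. rewrite Rmult_1_l. assert (0 <= eta / (1 - rho)) by (unfold Rdiv; apply Rmult_le_pos; [lra| left; apply Rinv_0_lt_compat; lra]). lra.
    - simpl (S k + M)%nat. rewrite HD.
      specialize (HM (k + M)%nat ltac:(lia)). unfold R_dist in HM. rewrite Rminus_0_r in HM.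
      eapply Rle_trans; [apply Rabs_triang|]. rewrite Rabs_mult, (Rabs_right rho) by lra.
      assert (rho * Rabs (x (k + M)%nat - L) <= rho * (rho ^ k * Rabs (x M - L) + eta / (1 - rho)))
        by (apply Rmult_le_compat_l; lra).
      assert (rho * (eta / (1 - rho)) + eta = eta / (1 - rho)) by (field; lra).
      simpl. nra. }
  destruct (Req_dec (Rabs (x M - L)) 0) as [Z|NZ].
  - exists M. intros n Hn. unfold R_dist. replace n with ((n - M) + M)%nat by lia.
    eapply Rle_lt_trans; [apply Hk|]. rewrite Z, Rmult_0_r.
    assert (eta / (1 - rho) = eps / 2) by (unfold eta; field; lra). lra.
  - assert (Hpos : 0 < Rabs (x M - L)) by (pose proof (Rabs_pos (x M - L)); lra).
    destruct (Req_dec rho 0) as [R0|RN].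
    + exists (S M). intros n Hn. unfold R_dist. replace n with (S (n - S M) + M)%nat by lia.
      eapply Rle_lt_trans; [apply Hk|]. rewrite R0. simpl. rewrite Rmult_0_l.
      unfold eta. rewrite R0. lra.
    + destruct (pow_lt_1_zero rho ltac:(rewrite Rabs_right; lra) (eps / 2 / Rabs (x M - L)))
        as [K HK]; [apply Rdiv_lt_0_compat; lra|].
      exists (K + M)%nat. intros n Hn. unfold R_dist. replace n with ((n - M) + M)%nat by lia.
      eapply Rle_lt_trans; [apply Hk|].
      specialize (HK (n - M)%nat ltac:(lia)). rewrite Rabs_right in HK by (apply Rle_ge, pow_le; lra).
      assert (rho ^ (n - M) * Rabs (x M - L) < eps / 2).
      { apply (Rmult_lt_compat_r (Rabs (x M - L))) in HK; auto.
        unfold Rdiv in HK at 1. rewrite Rmult_assoc, Rinv_l in HK by lra. lra. }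
      assert (eta / (1 - rho) = eps / 2) by (unfold eta; field; lra). lra.
Qed.


Definition Hn (y : R) (pi : nat -> R) (N a : nat) := sum_f_R0 (fun K => y ^ K * convpow K pi a) N.

Lemma renewal y pi N a : Hn y pi (S N) a = delta a + y * conv pi (Hn y pi N) a.
Proof.
  unfold Hn. rewrite sum_first. simpl (y ^ 0). rewrite Rmult_1_l, convpow_0. f_equal.
  unfold conv.
  transitivity (sum_f_R0 (fun K => sum_f_R0 (fun b => y ^ S K * (pi b * convpow K pi (a - b)%nat)) a) N).
  - apply sum_eq. intros K _. rewrite convpow_S. unfold conv. rewrite scal_sum.
    apply sum_eq; intros; ring.
  - rewrite sum_swap. rewrite scal_sum. apply sum_eq. intros b _.
    rewrite Rmult_comm, scal_sum, scal_sum. apply sum_eq. intros K _. simpl. ring.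
Qed.

Definition Hs (y z : R) (a : nat) : R :=
  match a with O => / (1 - y * z) | S a' => wc y z ^ a' * y * (1 - z) ^ 2 / (1 - y * z) ^ 2 end.

Lemma Sconv y z a : 0 <= y < 1 -> 0 <= z < 1 ->
  sum_f_R0 (fun i => z ^ i * Hs y z (a - i)%nat) a = wc y z ^ a / (1 - y * z).
Proof.
  intros Hy Hz. assert (Hyz : 1 - y * z <> 0) by nra.
  induction a.
  - simpl. field; auto.
  - rewrite sum_first. rewrite (sum_eq _ (fun i => (z ^ i * Hs y z (a - i)%nat) * z)).
    + rewrite <- scal_sum. rewrite IHa. simpl (S a - 0)%nat. simpl Hs. unfold wc. simpl.
      field; auto.
    + intros i _. simpl. ring.
Qed.

Lemma cv_lin (X : nat -> R) l k : Un_cv X l -> Un_cv (fun N => k * (X N - l)) 0.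
Proof.
  intros H. replace 0 with (k * (l - l)) by ring. apply CV_mult; [apply CV_const|].
  apply CV_minus; [auto| apply CV_const].
Qed.

Lemma Hn_cv y z : 0 < y < 1 -> 0 <= z < 1 -> forall a, Un_cv (fun N => Hn y (Lz z) N a) (Hs y z a).
Proof.
  intros Hy Hz. assert (Hyz : 0 <= y * z < 1) by nra.
  assert (Hyz' : 1 - y * z <> 0) by lra.
  assert (strong : forall n a, (a <= n)%nat -> Un_cv (fun N => Hn y (Lz z) N a) (Hs y z a)).
  2:{ intros a; apply (strong a); lia. }
  induction n; intros a Ha.
  - assert (a = 0)%nat by lia. subst.
    replace (Hs y z 0) with (1 / (1 - y * z)) by (simpl; field; auto).
    apply (rec_lim _ (fun _ => 0) 1 (y * z)); auto.
    + intros N. rewrite renewal. unfold conv. simpl. unfold delta; simpl. ring.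
    + intros eps He; exists 0%nat; intros; unfold R_dist; rewrite Rminus_0_r, Rabs_R0; auto.
  - destruct (le_lt_dec a n) as [Hle|Hlt]; [apply IHn; auto|].
    assert (a = S n) by lia. subst a.
    set (c := y * sum_f_R0 (fun i => Lz z (S i) * Hs y z (n - i)%nat) n).
    replace (Hs y z (S n)) with (c / (1 - y * z)).
    + apply (rec_lim _ (fun N => sum_f_R0 (fun i => y * Lz z (S i) * (Hn y (Lz z) N (n - i)%nat - Hs y z (n - i)%nat)) n)
               c (y * z)); auto.
      * intros N. rewrite renewal. unfold conv. rewrite sum_first. unfold delta; simpl Nat.eqb.
        unfold c. rewrite scal_sum. simpl (S n - 0)%nat.
        rewrite (sum_eq (fun i => Lz z (S i) * Hn y (Lz z) N (S n - S i)%nat)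
                        (fun i => Lz z (S i) * Hn y (Lz z) N (n - i)%nat)) by reflexivity.
        assert (Hsum : sum_f_R0 (fun i => Lz z (S i) * Hs y z (n - i)%nat * y) n +
             sum_f_R0 (fun i => y * Lz z (S i) * (Hn y (Lz z) N (n - i)%nat - Hs y z (n - i)%nat)) n
             = y * sum_f_R0 (fun i => Lz z (S i) * Hn y (Lz z) N (n - i)%nat) n).
        { rewrite <- sum_plus, scal_sum. apply sum_eq; intros; ring. }
        match goal with |- _ = ?A + ?B + ?C => replace (A + B + C) with (B + (A + C)) by ring end.
        rewrite Hsum. simpl Lz. ring.
      * apply cv_sum0. intros i Hi. apply cv_lin. apply IHn. lia.
    + unfold c. rewrite (sum_eq _ (fun i => (z ^ i * Hs y z (n - i)%nat) * (1 - z) ^ 2)) by (intros; simpl; ring).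
      rewrite <- scal_sum. rewrite Sconv by lra. simpl Hs. field; auto.
Qed.

Lemma comp y z a : 0 < y < 1 -> 0 <= z < 1 ->
  Un_cv (sum_f_R0 (fun K => Lz y K * convpow K (Lz z) a)) (Lz (wc y z) a).
Proof.
  intros Hy Hz. assert (Hyz : 0 <= y * z < 1) by nra.
  assert (Hyz' : 1 - y * z <> 0) by lra.
  set (k := (1 - y) ^ 2 / y).
  apply (Un_cv_ext (fun N => y * delta a + k * (Hn y (Lz z) N a - delta a))).
  - intros N. induction N.
    + unfold Hn. simpl. rewrite convpow_0. ring.
    + rewrite tech5, <- IHN. unfold Hn. rewrite tech5. simpl Lz. unfold k. replace (y ^ S N) with (y * y ^ N) by reflexivity. field. lra.
  - replace (Lz (wc y z) a) with (y * delta a + k * (Hs y z a - delta a)).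
    + apply CV_plus; [apply CV_const|]. apply CV_mult; [apply CV_const|].
      apply CV_minus; [apply Hn_cv; auto|apply CV_const].
    + unfold k. destruct a; unfold delta; simpl; unfold wc; field; split; lra.
Qed.

Definition cq (q : R) := (1 - q) / q.
Definition yy (q : R) (j : nat) := INR j * cq q / (1 + INR j * cq q).

Lemma cq_pos q : 0 < q < 1 -> 0 < cq q.
Proof. intros; unfold cq; apply Rdiv_lt_0_compat; lra. Qed.

Lemma yy_bounds q j : 0 < q < 1 -> 0 <= yy q j < 1.
Proof.
  intros Hq. pose proof (cq_pos q Hq). pose proof (pos_INR j). unfold yy.
  assert (0 <= INR j * cq q) by nra. split.
  - apply Rmult_le_pos; [nra|]. left; apply Rinv_0_lt_compat; lra.
  - apply (Rmult_lt_reg_r (1 + INR j * cq q)); [lra|]. unfold Rdiv. rewrite Rmult_assoc, Rinv_l; lra.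
Qed.

Lemma yy_S q j : 0 < q < 1 -> wc (1 - q) (yy q j) = yy q (S j).
Proof.
  intros Hq. pose proof (pos_INR j) as Hj.
  unfold wc, yy, cq. rewrite S_INR.
  assert (0 <= INR j * q * (1 - q)) by (apply Rmult_le_pos; [apply Rmult_le_pos|]; lra).
  field. repeat split; nra.
Qed.

Definition pgeo q := geom_offspring q.

Lemma geo_Lz q k : geom_offspring q k = Lz (1 - q) k.
Proof. destruct k; simpl; [ring|]. replace (1 - (1 - q)) with q by ring. reflexivity. Qed.

Lemma geo_nonneg q : 0 < q < 1 -> nonneg (geom_offspring q).
Proof. intros Hq k. destruct k; simpl; [lra|]. apply Rmult_le_pos; [nra|apply pow_le; lra]. Qed.

Lemma Den q : 0 < q < 1 -> forall n a,
  HS (fun s => gen n s = a) (gw_law (geom_offspring q) n) (Lz (yy q n) a).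
Proof.
  intros Hq. apply (T_all _ (fun j => Lz (yy q j))).
  - apply geo_nonneg; auto.
  - intros b. unfold yy. simpl INR. rewrite Rmult_0_l, Rplus_0_r.
    replace (0 / 1) with 0 by field.
    destruct b as [|[|b]]; simpl; ring.
  - intros j b. rewrite <- yy_S by auto.
    apply (Un_cv_ext (sum_f_R0 (fun K => Lz (1 - q) K * convpow K (Lz (yy q j)) b))).
    + intros N. apply sum_eq. intros; rewrite geo_Lz; auto.
    + apply comp; [lra|apply yy_bounds; auto].
Qed.

Lemma Numer q : 0 < q < 1 -> forall h j t a,
  HS (fun s => restr h s = t /\ gen (h + j) s = a) (gw_law (geom_offspring q) (h + j))
     (gw_law (geom_offspring q) h t * convpow (gen h t) (Lz (yy q j)) a).
Proof.
  intros Hq. apply N_all. apply geo_nonneg; auto. apply Den; auto.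
Qed.


Fixpoint Lk (k : nat) (z : R) : R := match k with O => 0 | S k' => z * Lk k' z + z ^ k' end.
Fixpoint Uk (k : nat) (z E : R) : R := match k with O => 0 | S k' => z * Uk k' z E + 1 + E * Uk k' z E end.

Lemma Lz_nonneg z b : 0 <= z <= 1 -> 0 <= Lz z b.
Proof. intros Hz; destruct b; simpl; [lra|]. apply Rmult_le_pos; [nra|apply pow_le; lra]. Qed.

Lemma convpow_nonneg pi K a : (forall b, 0 <= pi b) -> 0 <= convpow K pi a.
Proof.
  intros Hp. revert a; induction K; intros a.
  - rewrite convpow_0. unfold delta. destruct (Nat.eqb a 0); lra.
  - rewrite convpow_S. unfold conv. apply cond_pos_sum. intros; apply Rmult_le_pos; auto.
Qed.

Lemma sum_ge_last (f : nat -> R) n : (forall i, 0 <= f i) -> f n <= sum_f_R0 f n.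
Proof.
  intros H. destruct n; simpl; [lra|]. pose proof (cond_pos_sum f n H). lra.
Qed.

Lemma sum_le_cte (f : nat -> R) n M : (forall i, (i <= n)%nat -> f i <= M) -> sum_f_R0 f n <= INR (S n) * M.
Proof.
  intros H. induction n.
  - simpl. rewrite Rmult_1_l. apply H; lia.
  - rewrite tech5, S_INR. assert (f (S n) <= M) by (apply H; lia).
    assert (sum_f_R0 f n <= INR (S n) * M) by (apply IHn; intros; apply H; lia). lra.
Qed.

Lemma Lk_nonneg k z : 0 <= z -> 0 <= Lk k z.
Proof. intros Hz; induction k; simpl; [lra|]. pose proof (pow_le z k Hz). nra. Qed.
Lemma Uk_nonneg k z E : 0 <= z -> 0 <= E -> 0 <= Uk k z E.
Proof. intros Hz HE; induction k; simpl; [lra|]. nra. Qed.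

Lemma conv_split pi u a : conv pi u (S a) = pi 0%nat * u (S a) + sum_f_R0 (fun i => pi (S i) * u (a - i)%nat) a.
Proof. unfold conv. rewrite sum_first. reflexivity. Qed.

Lemma pow_le_one' z k : 0 <= z <= 1 -> z ^ k <= 1.
Proof. intros Hz; induction k; simpl; [lra|]. pose proof (pow_le z k (proj1 Hz)). nra. Qed.

Lemma low_bd z : 0 < z < 1 -> forall k a, Lk k z * (1 - z) ^ 2 * z ^ a <= convpow k (Lz z) (S a).
Proof.
  intros Hz k. induction k; intros a.
  - simpl. rewrite convpow_0. unfold delta; simpl. lra.
  - rewrite convpow_S, conv_split.
    pose proof (sum_ge_last (fun i => Lz z (S i) * convpow k (Lz z) (a - i)%nat) a) as Hl.
    simpl in Hl. rewrite Nat.sub_diag, convpow_zero_pt in Hl.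
    assert (Hnn : forall i, 0 <= Lz z (S i) * convpow k (Lz z) (a - i)%nat).
    { intros; apply Rmult_le_pos; [apply Lz_nonneg; lra| apply convpow_nonneg; intros; apply Lz_nonneg; lra]. }
    specialize (Hl Hnn). simpl Lz in *. specialize (IHk a). simpl Lk.
    assert (z * (Lk k z * (1 - z) ^ 2 * z ^ a) <= z * convpow k (Lz z) (S a)) by (apply Rmult_le_compat_l; lra).
    nra.
Qed.

Lemma up_bd z : 0 < z < 1 -> forall A k a, (a <= A)%nat ->
  convpow k (Lz z) (S a) <= Uk k z (INR A * (1 - z) ^ 2 / z) * (1 - z) ^ 2 * z ^ a.
Proof.
  intros Hz A. set (E := INR A * (1 - z) ^ 2 / z).
  assert (HE : 0 <= E) by (unfold E; apply Rmult_le_pos; [apply Rmult_le_pos; [apply pos_INR|nra]|left; apply Rinv_0_lt_compat; lra]).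
  induction k; intros a Ha.
  - simpl. rewrite convpow_0. unfold delta; simpl. lra.
  - rewrite convpow_S, conv_split. simpl Uk.
    pose proof (Uk_nonneg k z E ltac:(lra) HE) as HU.
    assert (H1 : Lz z 0 * convpow k (Lz z) (S a) <= z * (Uk k z E * (1 - z) ^ 2 * z ^ a))
      by (simpl Lz; apply Rmult_le_compat_l; [lra|apply IHk; auto]).
    assert (H2 : sum_f_R0 (fun i => Lz z (S i) * convpow k (Lz z) (a - i)%nat) a <=
                 (1 - z) ^ 2 * z ^ a + E * (Uk k z E * (1 - z) ^ 2 * z ^ a)).
    { destruct a as [|a].
      - simpl. rewrite convpow_zero_pt. simpl Lz.
        assert (z ^ k <= 1) by (apply pow_le_one'; lra). 
        assert (0 <= E * (Uk k z E * (1 - z) ^ 2 * 1)) by (apply Rmult_le_pos; [lra|]; apply Rmult_le_pos; [apply Rmult_le_pos; [lra|nra]|lra]).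
        assert (0 <= (1 - z) * ((1 - z) * 1) * 1) by nra. replace ((1 - z) * ((1 - z) * 1)) with ((1 - z) ^ 2) by ring. replace ((1 - z) * ((1 - z) * 1) * 1) with ((1 - z) ^ 2) in * by ring. nra.
      - rewrite tech5. rewrite Nat.sub_diag, convpow_zero_pt. change (Lz z (S (S a))) with ((1 - z) ^ 2 * z ^ S a).
        assert (Hs : sum_f_R0 (fun i => Lz z (S i) * convpow k (Lz z) (S a - i)%nat) a
                     <= INR (S a) * (Uk k z E * (1 - z) ^ 4 * z ^ a)).
        { apply sum_le_cte. intros i Hi. replace (S a - i)%nat with (S (a - i)) by lia.
          simpl Lz. 
          assert (HI := IHk (a - i)%nat ltac:(lia)).
          assert (Hp : z ^ i * z ^ (a - i) = z ^ a) by (rewrite <- pow_add; f_equal; lia).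
          assert (0 <= (1 - z) ^ 2 * z ^ i) by (apply Rmult_le_pos; [nra|apply pow_le; lra]).
          apply Rle_trans with ((1 - z) ^ 2 * z ^ i * (Uk k z E * (1 - z) ^ 2 * z ^ (a - i))).
          + apply Rmult_le_compat_l; auto.
          + replace (Uk k z E * (1 - z) ^ 4 * z ^ a) with
              (Uk k z E * (1 - z) ^ 4 * (z ^ i * z ^ (a - i))) by (rewrite Hp; auto). right; ring. }
        assert (HSa : INR (S a) <= INR A) by (apply le_INR; lia).
        assert (HEa : INR (S a) * (1 - z) ^ 2 / z <= E).
        { unfold E. unfold Rdiv. apply Rmult_le_compat_r; [left; apply Rinv_0_lt_compat; lra|].
          apply Rmult_le_compat_r; [nra|auto]. }
        assert (Hk : z ^ k <= 1) by (apply pow_le_one'; lra).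
        assert (Hza : 0 < z ^ a) by (apply pow_lt; lra).
        assert (Hid : INR (S a) * (Uk k z E * (1 - z) ^ 4 * z ^ a) =
                      (INR (S a) * (1 - z) ^ 2 / z) * (Uk k z E * (1 - z) ^ 2 * z ^ S a))
          by (simpl pow; field; lra).
        assert (0 <= Uk k z E * (1 - z) ^ 2 * z ^ S a)
          by (apply Rmult_le_pos; [apply Rmult_le_pos; [lra|nra]|apply pow_le; lra]).
        assert ((INR (S a) * (1 - z) ^ 2 / z) * (Uk k z E * (1 - z) ^ 2 * z ^ S a) <=
                E * (Uk k z E * (1 - z) ^ 2 * z ^ S a)) by (apply Rmult_le_compat_r; auto).
        assert ((1 - z) ^ 2 * z ^ S a * z ^ k <= (1 - z) ^ 2 * z ^ S a)
          by (assert (0 <= (1 - z) ^ 2 * z ^ S a) by (apply Rmult_le_pos; [nra|apply pow_le; lra]); nra).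
        change (Lz z 0) with z. lra. }
    nra.
Qed.

Lemma pow_div' z w n : w <> 0 -> (z / w) ^ n = z ^ n / w ^ n.
Proof. intros Hw. induction n; simpl; [field|]. rewrite IHn. field. split; auto. apply pow_nonzero; auto. Qed.

Lemma bernoulli x n : 0 <= x <= 1 -> 1 - INR n * x <= (1 - x) ^ n.
Proof.
  intros Hx. induction n; [simpl; lra|]. rewrite S_INR. simpl pow.
  assert (0 <= INR n) by apply pos_INR. assert (0 <= INR n * x * x) by (apply Rmult_le_pos; [apply Rmult_le_pos|]; lra).
  nra.
Qed.

Lemma ineqX M H c al : 1 <= M -> 0 <= H -> 0 < c -> 1 <= al ->
  0 <= (al - 1) * (1 - (M * c / (1 + M * c)) / ((M + H) * c / (1 + (M + H) * c)))
    <= H * (1 + H) / c * (al / (M + H) ^ 2).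
Proof.
  intros HM HH Hc Hal.
  assert (E : 1 - (M * c / (1 + M * c)) / ((M + H) * c / (1 + (M + H) * c)) = H / ((M + H) * (1 + M * c))).
  { field. repeat split; nra. }
  rewrite E. assert (0 < M + H) by lra. assert (0 < 1 + M * c) by nra.
  split.
  - apply Rmult_le_pos; [lra|]. apply Rmult_le_pos; [lra|]. left; apply Rinv_0_lt_compat; nra.
  - assert (HM' : M + H <= (1 + H) * M) by nra.
    apply Rle_trans with (al * H / ((M + H) * (1 + M * c))).
    + unfold Rdiv. rewrite <- Rmult_assoc. apply Rmult_le_compat_r; [left; apply Rinv_0_lt_compat; nra|]. nra.
    + unfold Rdiv. apply (Rmult_le_reg_r ((M + H) * (1 + M * c) * (M + H) ^ 2 * c)); [apply Rmult_lt_0_compat; [apply Rmult_lt_0_compat; nra|auto]|].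
      field_simplify; try (repeat split; nra).
      assert (0 <= al * H) by nra.
      assert (c * (M + H) <= (1 + H) * (1 + M * c)) by nra.
      assert (al * H * (c * (M + H)) <= al * H * ((1 + H) * (1 + M * c))) by (apply Rmult_le_compat_l; auto).
      nra.
Qed.

Lemma ineqE M H c al : 1 <= M -> 0 <= H -> 0 < c -> 1 <= al ->
  0 <= (al - 1) * (1 - M * c / (1 + M * c)) ^ 2 / (M * c / (1 + M * c))
    <= (1 + H) ^ 2 / c ^ 2 * (al / (M + H) ^ 2).
Proof.
  intros HM HH Hc Hal.
  assert (E : (al - 1) * (1 - M * c / (1 + M * c)) ^ 2 / (M * c / (1 + M * c)) = (al - 1) / ((1 + M * c) * (M * c))).
  { field. repeat split; nra. }
  rewrite E. assert (0 < M + H) by lra. assert (0 < 1 + M * c) by nra. assert (0 < M * c) by nra.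
  split.
  - apply Rmult_le_pos; [lra|]. left; apply Rinv_0_lt_compat; nra.
  - assert (HM' : M + H <= (1 + H) * M) by nra.
    apply (Rmult_le_reg_r ((1 + M * c) * (M * c) * (M + H) ^ 2 * c ^ 2)); [apply Rmult_lt_0_compat; [apply Rmult_lt_0_compat; nra|nra]|].
    unfold Rdiv. field_simplify; try (repeat split; nra).
    assert (A1 : (M + H) ^ 2 <= ((1 + H) * M) ^ 2) by (apply pow_incr; lra).
    assert (A2 : c ^ 2 * (M + H) ^ 2 <= c ^ 2 * ((1 + H) * M) ^ 2) by (apply Rmult_le_compat_l; nra).
    assert (A3 : c ^ 2 * ((1 + H) * M) ^ 2 <= (1 + H) ^ 2 * ((1 + M * c) * (M * c))) by nra.
    assert (A4 : (al - 1) * (c ^ 2 * (M + H) ^ 2) <= al * ((1 + H) ^ 2 * ((1 + M * c) * (M * c)))).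
    { apply Rle_trans with (al * (c ^ 2 * (M + H) ^ 2)). apply Rmult_le_compat_r; nra.
      apply Rmult_le_compat_l; lra. }
    nra.
Qed.

From Coquelicot Require Import Coquelicot.

Lemma lim_pow (zs : nat -> R) k : is_lim_seq zs 1 -> is_lim_seq (fun j => zs j ^ k) 1.
Proof.
  intros H. induction k; simpl.
  - apply is_lim_seq_const.
  - replace 1 with (1 * 1) by ring. apply is_lim_seq_mult'; auto.
Qed.

Lemma lim_Lk (zs : nat -> R) k : is_lim_seq zs 1 -> is_lim_seq (fun j => Lk k (zs j)) (INR k).
Proof.
  intros H. induction k; simpl Lk.
  - apply is_lim_seq_const.
  - rewrite S_INR. replace (INR k + 1) with (1 * INR k + 1) by ring.
    apply is_lim_seq_plus'; [apply is_lim_seq_mult'; auto| apply lim_pow; auto].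
Qed.

Lemma lim_Uk (zs Es : nat -> R) k : is_lim_seq zs 1 -> is_lim_seq Es 0 ->
  is_lim_seq (fun j => Uk k (zs j) (Es j)) (INR k).
Proof.
  intros H HE. induction k; simpl Uk.
  - apply is_lim_seq_const.
  - rewrite S_INR. replace (INR k + 1) with (1 * INR k + 1 + 0 * INR k) by ring.
    apply is_lim_seq_plus'; [apply is_lim_seq_plus'; [apply is_lim_seq_mult'; auto|apply is_lim_seq_const]|].
    apply is_lim_seq_mult'; auto.
Qed.

Lemma lim_invS : is_lim_seq (fun j => / INR (S j)) 0.
Proof.
  assert (H : is_lim_seq (fun j => INR (S j)) p_infty).
  { apply (is_lim_seq_incr_1 INR). apply is_lim_seq_INR. }
  apply (is_lim_seq_inv _ _ H). discriminate.
Qed.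

Lemma squeeze0 (u v : nat -> R) K : (forall j, 0 <= u j <= K * v j) -> is_lim_seq v 0 -> is_lim_seq u 0.
Proof.
  intros H Hv. apply (is_lim_seq_le_le (fun _ => 0) u (fun j => K * v j)); auto.
  apply is_lim_seq_const. replace (Finite 0) with (Finite (K * 0)) by (f_equal; ring).
  apply is_lim_seq_mult'; auto. apply is_lim_seq_const.
Qed.

Lemma zw_facts M c : 0 < M -> 0 < c -> 0 < M * c / (1 + M * c) < 1.
Proof.
  intros HM Hc. assert (0 < M * c) by nra. split.
  - apply Rdiv_lt_0_compat; lra.
  - apply (Rmult_lt_reg_r (1 + M * c)); [lra|]. unfold Rdiv. rewrite Rmult_assoc, Rinv_l; lra.
Qed.

Lemma ratio_lim q h k (alpha : nat -> nat) : 0 < q < 1 -> (forall n, (0 < alpha n)%nat) ->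
  Un_cv (fun n => INR (alpha n) / INR n ^ 2) 0 ->
  is_lim_seq (fun j => convpow k (Lz (yy q (S j))) (alpha (j + S h)%nat) / Lz (yy q (j + S h)%nat) (alpha (j + S h)%nat)) (INR k).
Proof.
  intros Hq Hpos Hal.
  pose proof (cq_pos q Hq) as Hc. set (c := cq q) in *.
  assert (HN : forall j, INR (j + S h)%nat = INR (S j) + INR h).
  { intros j. rewrite plus_INR, !S_INR. ring. }
  assert (HM : forall j, 1 <= INR (S j)) by (intros j; rewrite S_INR; pose proof (pos_INR j); lra).
  assert (HH : 0 <= INR h) by apply pos_INR.
  set (al := fun j => INR (alpha (j + S h)%nat)).
  assert (Hal1 : forall j, 1 <= al j) by (intros j; unfold al; apply (le_INR 1); apply Hpos).
  assert (HA : is_lim_seq (fun j => al j / (INR (S j) + INR h) ^ 2) 0).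
  { apply is_lim_seq_Reals. pose proof (CV_shift' _ (S h) 0 Hal) as H.
    apply (Un_cv_ext (fun n => INR (alpha (n + S h)%nat) / INR (n + S h)%nat ^ 2)); auto.
    intros j. unfold al. rewrite HN. reflexivity. }
  set (z := fun j => INR (S j) * c / (1 + INR (S j) * c)).
  set (w := fun j => (INR (S j) + INR h) * c / (1 + (INR (S j) + INR h) * c)).
  assert (Hz : forall j, yy q (S j) = z j) by reflexivity.
  assert (Hw : forall j, yy q (j + S h)%nat = w j) by (intros j; unfold yy, w; rewrite HN; reflexivity).
  assert (Hz1 : forall j, 0 < z j < 1) by (intros j; apply zw_facts; [specialize (HM j); lra|auto]).
  assert (Hw1 : forall j, 0 < w j < 1) by (intros j; apply zw_facts; [specialize (HM j); lra|auto]).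
  set (a' := fun j => pred (alpha (j + S h)%nat)).
  assert (Ha' : forall j, alpha (j + S h)%nat = S (a' j)) by (intros j; unfold a'; specialize (Hpos (j + S h)%nat%nat); lia).
  assert (Ha'R : forall j, INR (a' j) = al j - 1) by (intros j; unfold al; rewrite Ha', S_INR; ring).
  set (E := fun j => INR (a' j) * (1 - z j) ^ 2 / z j).
  set (Q := fun j => (1 - z j) ^ 2 * z j ^ a' j / ((1 - w j) ^ 2 * w j ^ a' j)).
  assert (HD : is_lim_seq (fun j => / (1 + INR (S j) * c)) 0).
  { apply (squeeze0 _ (fun j => / INR (S j)) (/ c)); [|apply lim_invS].
    intros j. specialize (HM j). split; [left; apply Rinv_0_lt_compat; nra|].
    rewrite <- Rinv_mult. apply Rinv_le_contravar; nra. }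
  assert (Hzl : is_lim_seq z 1).
  { apply (is_lim_seq_ext (fun j => 1 - / (1 + INR (S j) * c))).
    - intros j. unfold z. field. specialize (HM j); nra.
    - replace (Finite 1) with (Finite (1 - 0)) by (f_equal; ring).
      apply is_lim_seq_minus'; [apply is_lim_seq_const|auto]. }
  assert (HEl : is_lim_seq E 0).
  { apply (squeeze0 _ (fun j => al j / (INR (S j) + INR h) ^ 2) ((1 + INR h) ^ 2 / c ^ 2)); [|exact HA]. intros j. unfold E, z.
    rewrite Ha'R. apply ineqE; auto. }
  assert (HXl : is_lim_seq (fun j => INR (a' j) * (1 - z j / w j)) 0).
  { apply (squeeze0 _ (fun j => al j / (INR (S j) + INR h) ^ 2) (INR h * (1 + INR h) / c)); [|exact HA]. intros j. unfold w, z.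
    rewrite Ha'R. apply ineqX; auto. }
  assert (Hpw : is_lim_seq (fun j => (z j / w j) ^ a' j) 1).
  { apply (is_lim_seq_le_le (fun j => 1 - INR (a' j) * (1 - z j / w j)) _ (fun _ => 1)).
    - intros j. assert (Hx : 0 <= 1 - z j / w j <= 1).
      { assert (Hxx := ineqX (INR (S j)) (INR h) c 2 (HM j) HH Hc ltac:(lra)).
        replace (2 - 1) with 1 in Hxx by ring. rewrite Rmult_1_l in Hxx.
        assert (0 <= z j / w j) by (left; apply Rdiv_lt_0_compat; [apply Hz1|apply Hw1]).
        unfold z, w in *. lra. }
      split.
      + pose proof (bernoulli (1 - z j / w j) (a' j) Hx) as B.
        replace (1 - (1 - z j / w j)) with (z j / w j) in B by ring. exact B.
      + apply pow_le_one'. lra.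
    - replace (Finite 1) with (Finite (1 - 0)) by (f_equal; ring).
      apply is_lim_seq_minus'; [apply is_lim_seq_const|auto].
    - apply is_lim_seq_const. }
  assert (HQ : is_lim_seq Q 1).
  { apply (is_lim_seq_ext (fun j => (1 + INR h * c * / (1 + INR (S j) * c)) ^ 2 * (z j / w j) ^ a' j)).
    - intros j. unfold Q. rewrite pow_div' by (specialize (Hw1 j); lra).
      replace (1 + INR h * c * / (1 + INR (S j) * c)) with ((1 - z j) / (1 - w j)).
      + rewrite pow_div' by (specialize (Hw1 j); lra). specialize (Hw1 j).
        field; repeat split; try (apply pow_nonzero); lra.
      + unfold z, w. specialize (HM j). field. repeat split; nra.
    - replace (Finite 1) with (Finite ((1 + INR h * c * 0) ^ 2 * 1)) by (f_equal; ring).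
      apply is_lim_seq_mult'; auto. simpl pow.
      apply is_lim_seq_mult'; [|apply is_lim_seq_mult'; [|apply is_lim_seq_const]];
        (apply is_lim_seq_plus'; [apply is_lim_seq_const|]; apply is_lim_seq_mult'; [apply is_lim_seq_const|auto]). }
  apply (is_lim_seq_ext (fun j => convpow k (Lz (z j)) (S (a' j)) / ((1 - w j) ^ 2 * w j ^ a' j))).
  { intros j. rewrite Hz, Hw, Ha'. reflexivity. }
  apply (is_lim_seq_le_le (fun j => Lk k (z j) * Q j) _ (fun j => Uk k (z j) (E j) * Q j)).
  - intros j. assert (Hden : 0 < (1 - w j) ^ 2 * w j ^ a' j).
    { specialize (Hw1 j). apply Rmult_lt_0_compat; [nra|apply pow_lt; lra]. }
    unfold Q. split.
    + unfold Rdiv. rewrite <- Rmult_assoc. apply Rmult_le_compat_r; [left; apply Rinv_0_lt_compat; auto|].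
      rewrite <- Rmult_assoc. apply low_bd; auto.
    + unfold Rdiv. rewrite <- Rmult_assoc. apply Rmult_le_compat_r; [left; apply Rinv_0_lt_compat; auto|].
      rewrite <- Rmult_assoc. unfold E. apply up_bd; auto.
  - replace (Finite (INR k)) with (Finite (INR k * 1)) by (f_equal; ring).
    apply is_lim_seq_mult'; auto. apply lim_Lk; auto.
  - replace (Finite (INR k)) with (Finite (INR k * 1)) by (f_equal; ring).
    apply is_lim_seq_mult'; auto. apply lim_Uk; auto.
Qed.

Lemma spine_eq h (ks gw : ptree -> R) l : (forall c, ks c = INR (gen h c) * gw c) ->
  spine_sum ks gw l = INR (sumn (map (gen h) l)) * Rprod (map gw l).
Proof.
  intros H. induction l as [|c l IH]; simpl; [ring|].
  rewrite IH, H. unfold sumn. simpl. rewrite plus_INR. ring.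
Qed.

Lemma kesten_eq p : mean p = 1 -> forall h t, kesten_law p h t = INR (gen h t) * gw_law p h t.
Proof.
  intros Hm h. induction h; intros [l].
  - simpl. ring.
  - simpl kesten_law. rewrite (spine_eq h) by auto. unfold pstar. rewrite Hm.
    simpl gw_law. change (gen (S h) (Node l)) with (sumn (map (gen h) l)).
    destruct l as [|c l'].
    + simpl. ring.
    + set (k := length (c :: l')). assert (INR k <> 0) by (apply not_0_INR; unfold k; simpl; lia).
      field; auto.
Qed.

Lemma pow_quad x N : 0 <= x -> 1 + INR N * x + INR N * (INR N - 1) / 2 * x ^ 2 <= (1 + x) ^ N.
Proof.
  intros Hx. induction N.
  - simpl. lra.
  - rewrite S_INR. simpl pow.
    assert (0 <= INR N) by apply pos_INR.
    assert (0 <= INR N * x ^ 2 * x) by (apply Rmult_le_pos; [apply Rmult_le_pos|]; nra).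
    assert (0 <= INR N * (INR N - 1) / 2 * x ^ 2 * x).
    { destruct N; [simpl; lra|]. rewrite S_INR. assert (0 <= INR N) by apply pos_INR.
      apply Rmult_le_pos; [|lra]. apply Rmult_le_pos; [|nra]. nra. }
    nra.
Qed.

Lemma lin_pow_0 y : 0 < y < 1 -> Un_cv (fun N => INR N * y ^ N) 0.
Proof.
  intros Hy eps He. set (d := (1 - y) / y). assert (Hd : 0 < d) by (unfold d; apply Rdiv_lt_0_compat; lra).
  assert (Hyd : y = / (1 + d)) by (unfold d; field; lra).
  destruct (archimed (2 / (eps * d ^ 2) + 2)) as [Ha _].
  set (N0 := Z.to_nat (up (2 / (eps * d ^ 2) + 2))).
  assert (HN0 : 2 / (eps * d ^ 2) + 2 < INR N0).
  { unfold N0. rewrite INR_IZR_INZ, Z2Nat.id; auto.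
    assert (0 < 2 / (eps * d ^ 2)) by (apply Rdiv_lt_0_compat; [lra|]; apply Rmult_lt_0_compat; nra).
    apply le_IZR. lra. }
  exists N0. intros n Hn. unfold R_dist. rewrite Rminus_0_r.
  assert (Hn' : INR N0 <= INR n) by (apply le_INR; lia).
  assert (Hpos : 0 < y ^ n) by (apply pow_lt; lra).
  rewrite Rabs_right by (apply Rle_ge, Rmult_le_pos; [apply pos_INR|lra]).
  pose proof (pow_quad d n (Rlt_le _ _ Hd)) as Hq.
  assert (Hyn : y ^ n * (1 + d) ^ n = 1) by (rewrite <- Rpow_mult_distr, Hyd, Rinv_l; [apply pow1|lra]).
  assert (Hb : INR n * (INR n - 1) / 2 * d ^ 2 * y ^ n <= 1).
  { assert (0 <= 1 + INR n * d) by (pose proof (pos_INR n); nra). nra. }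
  assert (H2 : 2 / (eps * d ^ 2) < INR n - 2) by lra.
  assert (Hd2 : 0 < d ^ 2) by nra.
  assert (H3 : 2 < eps * d ^ 2 * (INR n - 2)).
  { apply (Rmult_lt_compat_l (eps * d ^ 2)) in H2; [|nra].
    replace (eps * d ^ 2 * (2 / (eps * d ^ 2))) with 2 in H2 by (field; nra). lra. }
  assert (HnR : 2 < INR n) by (assert (0 < 2 / (eps * d ^ 2)) by (apply Rdiv_lt_0_compat; nra); lra).
  set (A := d ^ 2 * y ^ n * INR n).
  assert (HA : 0 < A) by (unfold A; apply Rmult_lt_0_compat; [nra|lra]).
  assert (A * (INR n - 1) <= 2) by (unfold A; nra).
  assert (A * (INR n - 2) < eps * d ^ 2 * (INR n - 2)) by nra.
  apply (Rmult_lt_reg_l (d ^ 2 * (INR n - 2))); [nra|].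
  unfold A in *. nra.
Qed.

Lemma mean_geom q : 0 < q < 1 -> mean (geom_offspring q) = 1.
Proof.
  intros Hq. unfold mean. apply HS_tsum.
  apply (HS_part _ _ (fun k => k) (fun k => INR k * geom_offspring q k)).
  - intros k. apply Rmult_le_pos; [apply pos_INR|]. destruct k; simpl; [lra|].
    apply Rmult_le_pos; [nra|apply pow_le; lra].
  - intros K. apply (HS_single _ (fun k => INR k * geom_offspring q k) K).
    + intros k. apply Rmult_le_pos; [apply pos_INR|]. destruct k; simpl; [lra|].
      apply Rmult_le_pos; [nra|apply pow_le; lra].
    + intros x; split; [intros [_ H]; auto| intros ->; auto].
  - apply (Un_cv_ext (fun N => 1 - (1 + INR N * q) * (1 - q) ^ N)).
    + intros N. induction N.
      * simpl. ring.
      * rewrite tech5, <- IHN. rewrite S_INR. simpl geom_offspring. simpl pow. ring.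
    + assert (Hc : forall c : R, Un_cv (fun _ => c) c)
        by (intros c eps He; exists 0%nat; intros; unfold R_dist; rewrite Rminus_diag, Rabs_R0; auto).
      assert (H0 : Un_cv (fun N => (1 + INR N * q) * (1 - q) ^ N) 0).
      { apply (Un_cv_ext (fun N => (1 - q) ^ N + q * (INR N * (1 - q) ^ N))); [intros; ring|].
        replace 0 with (0 + q * 0) by ring. apply CV_plus.
        - intros eps He. destruct (pow_lt_1_zero (1 - q) ltac:(rewrite Rabs_right; lra) eps He) as [N HN].
          exists N; intros; unfold R_dist; rewrite Rminus_0_r; apply HN; lia.
        - apply CV_mult; [apply Hc|]. apply lin_pow_0; lra. }
      pose proof (CV_minus _ _ 1 0 (Hc 1) H0) as HH. rewrite Rminus_0_r in HH. exact HH.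
Qed.

From Coquelicot Require Import Coquelicot.

Theorem corollary6p2 (q : R) (hq : 0 < q < 1) (alpha : nat -> nat)
  (halpha_pos : forall n, (0 < alpha n)%nat)
  (halpha : Un_cv (fun n => INR (alpha n) / INR n ^ 2) 0) :
  forall (h : nat) (t : ptree),
    Un_cv (fun n => gw_cond_law (geom_offspring q) n (alpha n) h t)
          (kesten_law (geom_offspring q) h t).
Proof.
  intros h t.
  rewrite (kesten_eq _ (mean_geom q hq)).
  apply (CV_shift _ (S h)).
  apply (Un_cv_ext (fun j => gw_law (geom_offspring q) h t *
     (convpow (gen h t) (Lz (yy q (S j))) (alpha (j + S h)%nat) / Lz (yy q (j + S h)) (alpha (j + S h)%nat)))).
  - intros j. unfold gw_cond_law.
    replace (Nat.max (j + S h) h) with (h + S j)%nat by lia.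
    replace (j + S h)%nat with (h + S j)%nat by lia.
    rewrite (HS_tsum _ _ _ (Numer q hq h (S j) t (alpha (h + S j)%nat))).
    rewrite (HS_tsum _ _ _ (Den q hq (h + S j) (alpha (h + S j)%nat))).
    unfold Rdiv; ring.
  - apply is_lim_seq_Reals. rewrite Rmult_comm.
    apply is_lim_seq_mult'; [apply is_lim_seq_const|]. apply ratio_lim; auto.
Qed.
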